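(* Consider a finite reward-free MDP with occupancy polytope $\Phi$ and fix $d_e^\star\in\Phi$. There exists a constant $C>0$, depending only on the reward-free MDP (with $d_e^\star$ fixed), such that for every dataset $\mathcal D=\{(d_e^k,\epsilon^k)\}_{k=1}^K$ ($d_e^k\in\Phi$, $\epsilon^k\ge0$) with $\mathcal R(\mathcal D)\neq\emptyset$, \[d_H\big(\mathcal R(\mathcal D)\mid\mathcal R(d_e^\star)\big)\le C\,\mathrm{Gap}\big(\mathcal R(\mathcal D),\mathcal R(d_e^\star)\big).\] In particular, $\mathrm{Gap}(\mathcal R(\mathcal D),\mathcal R(d_e^\star))\to0$ implies $d_H(\mathcal R(\mathcal D)\mid\mathcal R(d_e^\star))\to0$.
   Context: The MDP has finite $S$, $A$, transitions $P$, initial distribution $\mu_0$, discount $\gamma\in(0,1)$; $(Md)(s)=\sum_a d(s,a)-\gamma\sum_{s',a'}P(s\mid s',a')d(s',a')$ and $\Phi=\{d\ge0:Md=(1-\gamma)\mu_0\}$. Rewards are $r\in\Delta(S\times A)$. $\mathrm{subopt}(r,d):=\max_{\tilde d\in\Phi}r^\top\tilde d-r^\top d$. $\mathcal R(\mathcal D):=\{r\in\Delta(S\times A):\mathrm{subopt}(r,d_e^k)\le\epsilon^k\ \forall k\}$; $\mathcal R(d_e^\star):=\{r\in\Delta(S\times A):\mathrm{subopt}(r,d_e^\star)=0\}$. $\mathrm{Gap}(\mathcal R,\mathcal R(d_e^\star)):=\max_{r\in\mathcal R}\mathrm{subopt}(r,d_e^\star)$. For nonempty $A',B\subset\mathbb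 R^m$, $d_H(A'\mid B):=\sup_{x\in A'}\inf_{y\in B}\|x-y\|_\infty$. *)

(* Defs.v *)
From HB Require Import structures.
From mathcomp Require Import all_boot all_order all_algebra.
From mathcomp Require Import all_classical all_reals.
Set Implicit Arguments. Unset Strict Implicit. Unset Printing Implicit Defensive.
Import Order.TTheory GRing.Theory Num.Theory.
Local Open Scope classical_set_scope.
Local Open Scope ring_scope.

Section MDP.
Variables (R : realType) (S A : finType).

Definition sa_vec := (S * A)%type -> R.

(* transition kernel: P s' a s = P(s | s', a) *)
Definition is_kernel (P : S -> A -> S -> R) : Prop :=
  (forall s' a s, 0 <= P s' a s) /\ (forall s' a, \sum_(s : S) P s' a s = 1).

Definition is_dist_S (mu : S -> R) : Prop :=
  (forall s, 0 <= mu s) /\ \sum_(s : S) mu s = 1.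

Definition flowM (P : S -> A -> S -> R) (gamma : R) (d : sa_vec) (s : S) : R :=
  \sum_(a : A) d (s, a) - gamma * \sum_(p : S * A) P p.1 p.2 s * d p.

Definition Phi (P : S -> A -> S -> R) (mu0 : S -> R) (gamma : R) : set sa_vec :=
  [set d | (forall p, 0 <= d p) /\
           (forall s, flowM P gamma d s = (1 - gamma) * mu0 s)].

Definition dotv (r d : sa_vec) : R := \sum_(p : S * A) r p * d p.

Definition simplex : set sa_vec :=
  [set r | (forall p, 0 <= r p) /\ \sum_(p : S * A) r p = 1].

Definition subopt P mu0 gamma (r d : sa_vec) : R :=
  sup [set dotv r dt | dt in Phi P mu0 gamma] - dotv r d.

Definition feasR P mu0 gamma (K : nat) (dk : 'I_K -> sa_vec) (epsk : 'I_K -> R)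
  : set sa_vec :=
  [set r | simplex r /\ (forall k, subopt P mu0 gamma r (dk k) <= epsk k)].

Definition feasRstar P mu0 gamma (dstar : sa_vec) : set sa_vec :=
  [set r | simplex r /\ subopt P mu0 gamma r dstar = 0].

Definition Gap P mu0 gamma (Rset : set sa_vec) (dstar : sa_vec) : R :=
  sup [set subopt P mu0 gamma r dstar | r in Rset].

Definition dinf (x y : sa_vec) : R := \big[Num.max/0]_(p : S * A) `|x p - y p|.

Definition dH (A' B : set sa_vec) : R :=
  sup [set inf [set dinf x y | y in B] | x in A'].

End MDP.

(* Main.v *)
Require Import Defs.
From HB Require Import structures.
From mathcomp Require Import all_boot all_order all_algebra.
From mathcomp Require Import all_classical all_reals.
Import Order.TTheory GRing.Theory Num.Theory.
Local Open Scope classical_set_scope.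
Local Open Scope ring_scope.
From mathcomp Require Import ring lra.
Lemma fix0 (R : realType) (I : finType) (Q : I -> I -> R) (g : R) :
  (forall i j, 0 <= Q i j) -> (forall i, \sum_j Q i j = 1) -> 0 <= g -> g < 1 ->
  forall x : I -> R, (forall i, x i = g * \sum_j Q i j * x j) -> forall i, x i = 0.
Proof.
move=> Q0 Q1 g0 g1 x hx i.
have [m _ hm] := @arg_maxP _ _ I i predT (fun k => `|x k|) isT.
have : `|x m| <= g * `|x m|.
  rewrite {1}hx normrM ger0_norm //; apply: ler_wpM2l => //.
  apply: le_trans (ler_norm_sum _ _ _) _.
  rewrite -[leRHS]mul1r -(Q1 m) mulr_suml; apply: ler_sum => j _.
  by rewrite normrM ger0_norm // ler_wpM2l //; exact: hm.
move=> h.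
have hm0 : `|x m| = 0.
  apply/eqP; rewrite eq_le normr_ge0 andbT.
  have : (1 - g) * `|x m| <= 0 by rewrite mulrBl mul1r subr_le0.
  by rewrite pmulr_rle0 // subr_gt0.
by apply/normr0_eq0; apply/eqP; rewrite eq_le normr_ge0 andbT -hm0; exact: hm.
Qed.
Lemma solve_lin (R : realType) (I : finType) (Q : I -> I -> R) (g : R) :
  (forall i j, 0 <= Q i j) -> (forall i, \sum_j Q i j = 1) -> 0 <= g -> g < 1 ->
  forall b : I -> R,
  (exists x : I -> R, forall i, x i = b i + g * \sum_j Q i j * x j) /\
  (exists y : I -> R, forall j, y j = b j + g * \sum_i y i * Q i j).
Proof.
move=> Q0 Q1 g0 g1 b.
pose n := #|I|.
pose Qm : 'M[R]_n := \matrix_(i, j) Q (enum_val i) (enum_val j).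
pose M : 'M[R]_n := 1%:M - g *: Qm.
have sumE (F : I -> R) : \sum_(j < n) F (enum_val j) = \sum_j F j.
  by rewrite -big_enum_val.
have Mx (x : 'cV[R]_n) i : (M *m x) i 0 = x i 0 - g * \sum_j Q (enum_val i) j * x (enum_rank j) 0.
  rewrite mulmxBl mul1mx -scalemxAl !mxE -sumE; congr (_ - g * _).
  by apply: eq_bigr => j _; rewrite !mxE enum_valK.
have xM (x : 'rV[R]_n) j : (x *m M) 0 j = x 0 j - g * \sum_i x 0 (enum_rank i) * Q i (enum_val j).
  rewrite mulmxBr mulmx1 -scalemxAr !mxE -sumE; congr (_ - g * _).
  by apply: eq_bigr => i _; rewrite !mxE enum_valK.
have Mu : M \in unitmx.
  rewrite -unitmx_tr -row_free_unit -kermx_eq0; apply/eqP/row_matrixP => k.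
  rewrite row0; set v := row k _.
  have /sub_kermxP hv : (v <= kermx M^T)%MS by exact: row_sub.
  have hv' : M *m v^T = 0 by rewrite -[M]trmxK -trmx_mul hv trmx0.
  have h0 := @fix0 R I Q g Q0 Q1 g0 g1 (fun s => v^T (enum_rank s) 0).
  have hx : forall s, v^T (enum_rank s) 0 = g * \sum_j Q s j * v^T (enum_rank j) 0.
    move=> s; have := congr1 (fun A : 'cV[R]_n => A (enum_rank s) 0) hv'.
    rewrite Mx !mxE enum_rankK => /eqP; rewrite subr_eq0 => /eqP ->.
    by apply: congr1; apply: eq_bigr => j _; rewrite !mxE.
  apply/rowP => j; have := h0 hx (enum_val j).
  by rewrite enum_valK !mxE.
split.
  pose x := invmx M *m \col_i b (enum_val i).
  exists (fun s => x (enum_rank s) 0) => s.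
  have := congr1 (fun A : 'cV[R]_n => A (enum_rank s) 0) (mulKVmx Mu (\col_i b (enum_val i))).
  rewrite -/x Mx !mxE enum_rankK => <-; ring.
pose y := \row_i b (enum_val i) *m invmx M.
exists (fun s => y 0 (enum_rank s)) => s.
have := congr1 (fun A : 'rV[R]_n => A 0 (enum_rank s)) (mulmxKV Mu (\row_i b (enum_val i))).
rewrite -/y xM !mxE enum_rankK => <-; ring.
Qed.
Lemma mono (R : realType) (I : finType) (Q : I -> I -> R) (g : R) :
  (forall i j, 0 <= Q i j) -> (forall i, \sum_j Q i j = 1) -> 0 <= g -> g < 1 ->
  forall x : I -> R, (forall i, g * \sum_j Q i j * x j <= x i) -> forall i, 0 <= x i.
Proof.
move=> Q0 Q1 g0 g1 x hx i.
have [m _ hm] := @arg_minP _ _ I i predT x isT.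
apply: le_trans (hm i isT); rewrite leNgt; apply/negP => xm0.
have h1 : x m <= \sum_j Q m j * x j.
  rewrite -[leLHS]mul1r -(Q1 m) mulr_suml; apply: ler_sum => j _.
  by rewrite ler_wpM2l //; exact: hm.
have h2 : g * x m <= g * \sum_j Q m j * x j by rewrite ler_wpM2l.
have := hx m; nra.
Qed.

Lemma monoT (R : realType) (I : finType) (Q : I -> I -> R) (g : R) :
  (forall i j, 0 <= Q i j) -> (forall i, \sum_j Q i j = 1) -> 0 <= g -> g < 1 ->
  forall (b y : I -> R), (forall j, 0 <= b j) ->
  (forall j, y j = b j + g * \sum_i y i * Q i j) -> forall j, 0 <= y j.
Proof.
move=> Q0 Q1 g0 g1 b y b0 hy j0.
have [[x hx] _] := @solve_lin R I Q g Q0 Q1 g0 g1 (fun i => (i == j0)%:R).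
have x0 : forall i, 0 <= x i.
  apply: (@mono R I Q g Q0 Q1 g0 g1) => i; rewrite [leRHS]hx lerDr.
  by case: (i == j0).
have e1 : \sum_i y i * (x i - g * \sum_j Q i j * x j) = y j0.
  rewrite (bigD1 j0) //= [X in _ + X]big1 => [|i hi].
    by rewrite hx addrK eqxx mulr1 addr0.
  by rewrite hx addrK (negPf hi) mulr0.
have e2 : \sum_i y i * (x i - g * \sum_j Q i j * x j) = \sum_j x j * b j.
  have -> : \sum_j x j * b j = \sum_j x j * (y j - g * \sum_i y i * Q i j).
    by apply: eq_bigr => j _; rewrite {1}hy addrK.
  under eq_bigr do rewrite mulrBr mulr_sumr mulr_sumr.
  under [RHS]eq_bigr do rewrite mulrBr mulr_sumr mulr_sumr.
  rewrite !sumrB; congr (_ - _).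
    by apply: eq_bigr => i _; rewrite mulrC.
  rewrite exchange_big /=; apply: eq_bigr => j _; apply: eq_bigr => i _.
  ring.
rewrite -e1 e2; apply: sumr_ge0 => j _; exact: mulr_ge0.
Qed.

Lemma le_sum_term (R : realType) (I : finType) (F : I -> R) i :
  (forall j, 0 <= F j) -> F i <= \sum_j F j.
Proof.
move=> F0; rewrite (bigD1 i) //= lerDl; apply: sumr_ge0 => j _; exact: F0.
Qed.

Lemma sup_attain (R : realType) (E : set R) x :
  E x -> (forall y, E y -> y <= x) -> sup E = x.
Proof.
move=> Ex ub; apply/eqP; rewrite eq_le; apply/andP; split.
  by apply: ge_sup; [exists x | move=> y /ub].
by apply: ub_le_sup => //; exists x => y /ub.
Qed.

Definition adv (R : realType) (S A : finType) (P : S -> A -> S -> R) (gamma : R)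
  (r : sa_vec R S A) (V : S -> R) (p : S * A) : R :=
  r p + gamma * \sum_s' P p.1 p.2 s' * V s' - V p.1.

Arguments adv {R S A} P gamma r V p.

Lemma sum_pairE (R : realType) (S A : finType) (F : S * A -> R) :
  \sum_s \sum_a F (s, a) = \sum_p F p.
Proof. by rewrite pair_bigA; apply: eq_bigr => -[]. Qed.

Lemma sum_Phi (R : realType) (S A : finType) (P : S -> A -> S -> R) (mu0 : S -> R)
  (gamma : R) : is_kernel P -> is_dist_S mu0 -> gamma < 1 ->
  forall d, Phi P mu0 gamma d -> \sum_p d p = 1.
Proof.
move=> [P0 P1] [m0 m1] g1 d [d0 hd].
have : \sum_s flowM P gamma d s = \sum_s (1 - gamma) * mu0 s.
  by apply: eq_bigr => s _; rewrite hd.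
rewrite -mulr_sumr m1 mulr1 /flowM sumrB sum_pairE -mulr_sumr exchange_big /=.
under [X in _ - gamma * X = _]eq_bigr => p _ do rewrite -mulr_suml (P1 p.1 p.2) mul1r.
move=> h.
have e : (1-gamma) * (\sum_p d p - 1) = (\sum_p d p - gamma * \sum_p d p) - (1 - gamma) by ring.
rewrite h subrr in e; move/eqP: e; rewrite mulf_eq0 subr_eq0 => /orP [/eqP g|]; first by move: g1; rewrite -g ltxx.
by rewrite subr_eq0 => /eqP.
Qed.

Lemma dot_adv (R : realType) (S A : finType) (P : S -> A -> S -> R) (mu0 : S -> R)
  (gamma : R) (r : sa_vec R S A) (V : S -> R) (d : sa_vec R S A) :
  (forall s, flowM P gamma d s = (1 - gamma) * mu0 s) ->
  dotv r d = (1 - gamma) * \sum_s mu0 s * V s + \sum_p d p * adv P gamma r V p.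
Proof.
move=> hd.
have e1 : \sum_p d p * V p.1 = \sum_s V s * ((1 - gamma) * mu0 s) +
      gamma * \sum_p d p * \sum_s' P p.1 p.2 s' * V s'.
  rewrite -sum_pairE /=.
  have -> : \sum_s \sum_a d (s, a) * V s = \sum_s V s * \sum_a d (s, a).
    by apply: eq_bigr => s _; rewrite mulr_sumr; apply: eq_bigr => a _; rewrite mulrC.
  have hs : forall s, \sum_a d (s, a) = (1 - gamma) * mu0 s + gamma * \sum_p P p.1 p.2 s * d p.
    by move=> s; rewrite -hd /flowM; ring.
  transitivity (\sum_s (V s * ((1 - gamma) * mu0 s) + V s * (gamma * \sum_p P p.1 p.2 s * d p))).
    by apply: eq_bigr => s _; rewrite hs mulrDr.
  rewrite big_split /=; congr (_ + _).
  transitivity (gamma * \sum_s \sum_p V s * (P p.1 p.2 s * d p)).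
    rewrite mulr_sumr; apply: eq_bigr => s _.
    rewrite mulr_sumr mulr_sumr mulr_sumr; apply: eq_bigr => p _; ring.
  congr (gamma * _); rewrite exchange_big /=; apply: eq_bigr => p _.
  rewrite mulr_sumr; apply: eq_bigr => s _; ring.
have e2 : \sum_p d p * adv P gamma r V p = \sum_p d p * r p +
    gamma * (\sum_p d p * \sum_s' P p.1 p.2 s' * V s') - \sum_p d p * V p.1.
  rewrite [X in _ = _ + X - _]mulr_sumr -big_split -sumrB /=; apply: eq_bigr => p _; rewrite /adv; ring.
have e3 : \sum_s V s * ((1 - gamma) * mu0 s) = (1 - gamma) * \sum_s mu0 s * V s.
  by rewrite mulr_sumr; apply: eq_bigr => s _; ring.
have e4 : dotv r d = \sum_p d p * r p by apply: eq_bigr => i _; rewrite mulrC.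
rewrite e2 e1 e3 e4; ring.
Qed.

Lemma pointwise (R : realType) (S A : finType) (P : S -> A -> S -> R) (mu0 : S -> R) (gamma : R)
  (hP : is_kernel P) (hmu0 : is_dist_S mu0) (g0 : 0 < gamma) (g1 : gamma < 1)
  (dstar : sa_vec R S A) (hdstar : Phi P mu0 gamma dstar) (r : sa_vec R S A) (hr : simplex r) :
  exists r2, feasRstar P mu0 gamma dstar r2 /\
    forall p, `|r p - r2 p| <= ((#|{: S * A}|%:R + 1) *
       (\sum_q (if 0 < dstar q then (dstar q)^-1 else 0) + 1)) * subopt P mu0 gamma r dstar.
Proof.
have [P0 P1] := hP; have [m0 m1] := hmu0; have [r0 r1] := hr.
have g0' : 0 <= gamma := ltW g0.
have [[s0 a0] _] : exists p : S * A, true.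
  case: (pickP (@predT (S * A))) => [p _|h]; first by exists p.
  move: r1; rewrite big1 => [/eqP|p _]; first by rewrite eq_sym oner_eq0.
  by have := h p.
pose Q (pi : {ffun S -> A}) := fun s s' => P s (pi s) s'.
have Q0 pi : forall i j, 0 <= Q pi i j by move=> i j; exact: P0.
have Q1 pi : forall i, \sum_j Q pi i j = 1 by move=> i; exact: P1.
have Vex (pi : {ffun S -> A}) : exists V : S -> R, forall s, V s = r (s, pi s) + gamma * \sum_j Q pi s j * V j.
  exact: (proj1 (@solve_lin R S (Q pi) gamma (Q0 pi) (Q1 pi) g0' g1 (fun s => r (s, pi s)))).
pose Vof (pi : {ffun S -> A}) := proj1_sig (cid (Vex pi)).
have VofE (pi : {ffun S -> A}) s : Vof pi s = r (s, pi s) + gamma * \sum_j Q pi s j * Vof pi j.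
  exact: (proj2_sig (cid (Vex pi)) s).
pose pi0 : {ffun S -> A} := [ffun => a0].
pose pis := [arg max_(pi > pi0) \sum_s Vof pi s]%O.
have pimax : forall pi, \sum_s Vof pi s <= \sum_s Vof pis s.
  rewrite /pis; case: arg_maxP => //= pi' _ h pi; exact: h.
pose Adv := adv P gamma r (Vof pis).
have Api s : Adv (s, pis s) = 0.
  rewrite /Adv /adv /= [X in _ - X]VofE /Q /=; ring.
have Ale : forall p, Adv p <= 0.
  move=> [s1 a1]; rewrite leNgt; apply/negP => hpos.
  pose pi' : {ffun S -> A} := [ffun s => if s == s1 then a1 else pis s].
  pose w s := Vof pi' s - Vof pis s.
  have hw : forall s, w s = Adv (s, pi' s) + gamma * \sum_j Q pi' s j * w j.
    move=> s; rewrite /w VofE /Adv /adv /= /Q /=.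
    under [X in _ = _ + gamma * X]eq_bigr do rewrite mulrBr.
    rewrite sumrB; ring.
  have hA : forall s, 0 <= Adv (s, pi' s).
    move=> s; rewrite /pi' ffunE; case: eqP => [-> | _]; [exact: ltW | by rewrite Api].
  have w0 : forall s, 0 <= w s.
    apply: (@mono R S (Q pi') gamma (Q0 pi') (Q1 pi') g0' g1) => s.
    rewrite [leRHS]hw lerDr; exact: hA.
  have ws1 : 0 < w s1.
    have e : pi' s1 = a1 by rewrite /pi' ffunE eqxx.
    have hs : 0 <= gamma * \sum_j Q pi' s1 j * w j.
      by apply: mulr_ge0 => //; apply: sumr_ge0 => j _; apply: mulr_ge0.
    rewrite hw e; lra.
  have hsw : \sum_s w s = \sum_s Vof pi' s - \sum_s Vof pis s by rewrite -sumrB.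
  have := @le_sum_term R S w s1 w0.
  have := pimax pi'; lra.
have [_ [nu hnu]] := @solve_lin R S (Q pis) gamma (Q0 pis) (Q1 pis) g0' g1
   (fun s => (1 - gamma) * mu0 s).
have nu0 : forall s, 0 <= nu s.
  apply: (@monoT R S (Q pis) gamma (Q0 pis) (Q1 pis) g0' g1 _ nu _ hnu) => s.
  by apply: mulr_ge0 => //; rewrite subr_ge0 ltW.
pose dpi : sa_vec R S A := fun p => if p.2 == pis p.1 then nu p.1 else 0.
have dpiPhi : Phi P mu0 gamma dpi.
  split; first by move=> [s a]; rewrite /dpi /=; case: ifP.
  move=> s; rewrite /flowM.
  have -> : \sum_a dpi (s, a) = nu s.
    by rewrite /dpi /= (bigD1 (pis s)) //= eqxx big1 ?addr0 // => a /negPf ->.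
  have -> : \sum_p P p.1 p.2 s * dpi p = \sum_s' nu s' * Q pis s' s.
    rewrite -sum_pairE; apply: eq_bigr => s' _ /=; rewrite /dpi /=.
    rewrite (bigD1 (pis s')) //= eqxx big1 ?addr0 => [|a /negPf ->]; last by rewrite mulr0.
    by rewrite mulrC.
  rewrite hnu; ring.
have dpiA : \sum_p dpi p * Adv p = 0.
  apply: big1 => -[s a] _; rewrite /dpi /=.
  by case: eqP => [-> | _]; [rewrite Api mulr0 | rewrite mul0r].
pose J := (1 - gamma) * \sum_s mu0 s * Vof pis s.
have dotJ : forall d, Phi P mu0 gamma d -> dotv r d = J + \sum_p d p * Adv p.
  by move=> d hd; rewrite (@dot_adv R S A P mu0 gamma r (Vof pis) d hd.2).
have supJ : sup [set dotv r dt | dt in Phi P mu0 gamma] = J.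
  apply: sup_attain; first by exists dpi => //; rewrite dotJ // dpiA addr0.
  move=> y [d hd <-]; rewrite dotJ // gerDl; apply: sumr_le0 => p _.
  by apply: mulr_ge0_le0; [exact: hd.1 | exact: Ale].
pose eps := subopt P mu0 gamma r dstar.
have epsE : eps = - \sum_p dstar p * Adv p.
  by rewrite /eps /subopt supJ (dotJ _ hdstar); ring.
pose e p := if 0 < dstar p then - Adv p else 0.
have e0 p : 0 <= e p by rewrite /e; case: ifP => _ //; rewrite oppr_ge0.
pose Dst := \sum_q (if 0 < dstar q then (dstar q)^-1 else 0).
have Dst_ge0 q : 0 <= (if 0 < dstar q then (dstar q)^-1 else 0).
  by case: ifP => // hq; rewrite invr_ge0 ltW.
have Dst0 : 0 <= Dst by apply: sumr_ge0 => q _; exact: Dst_ge0.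
have Dst_term q : 0 < dstar q -> (dstar q)^-1 <= Dst.
  move=> hq; have := @le_sum_term R _ (fun q => if 0 < dstar q then (dstar q)^-1 else 0) q Dst_ge0.
  by rewrite hq.
have dA0 q : 0 <= - (dstar q * Adv q).
  by rewrite -mulrN mulr_ge0 // ?oppr_ge0; [exact: hdstar.1 q | exact: Ale].
have eps0 : 0 <= eps by rewrite epsE -sumrN; apply: sumr_ge0 => p _.
have ebound p : e p <= eps * Dst.
  rewrite /e; case: ifP => hp; last exact: mulr_ge0.
  have h1 : dstar p * (- Adv p) <= eps.
    rewrite epsE -sumrN mulrN; exact: (@le_sum_term R _ (fun q => - (dstar q * Adv q)) p dA0).
  have h2 : - Adv p = (dstar p * - Adv p) * (dstar p)^-1.
    by rewrite mulrC mulrA mulVf ?mul1r // gt_eqF.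
  rewrite h2; apply: le_trans (ler_wpM2r _ h1) _; first by rewrite invr_ge0 ltW.
  by rewrite ler_wpM2l // Dst_term.
pose T := \sum_p e p.
have T0 : 0 <= T by apply: sumr_ge0 => p _.
have Tb : T <= #|{: S * A}|%:R * (eps * Dst).
  apply: le_trans (ler_sum _ (fun p _ => ebound p)) _.
  by rewrite sumr_const mulr_natl.
pose sig := 1 + T.
have sig_pos : 0 < sig by rewrite /sig; lra.
pose r2 : sa_vec R S A := fun p => (r p + e p) / sig.
have adv2 p : adv P gamma (fun q => r q + e q) (Vof pis) p = if 0 < dstar p then 0 else Adv p.
  rewrite /adv /= /e; case: ifP => _; rewrite /Adv /adv /=; ring.
have dot2 d : Phi P mu0 gamma d ->
    dotv (fun q => r q + e q) d = J + \sum_p d p * (if 0 < dstar p then 0 else Adv p).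
  move=> hd; rewrite (@dot_adv R S A P mu0 gamma _ (Vof pis) d hd.2); congr (_ + _).
  by apply: eq_bigr => p _; rewrite adv2.
have dot2s d : dotv r2 d = dotv (fun q => r q + e q) d / sig.
  by rewrite /dotv mulr_suml; apply: eq_bigr => p _; rewrite /r2 mulrAC.
exists r2; split.
  split.
    split; first by move=> p; apply: divr_ge0; [exact: addr_ge0 | exact: ltW].
    by rewrite /r2 -mulr_suml big_split /= r1 -/T divff // gt_eqF.
  rewrite /subopt (@sup_attain R _ (dotv r2 dstar)) ?subrr //; first by exists dstar.
  move=> y [d hd <-]; rewrite !dot2s; apply: ler_wpM2r; first by rewrite invr_ge0 ltW.
  rewrite !dot2 //.
  have -> : \sum_p dstar p * (if 0 < dstar p then 0 else Adv p) = 0.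
    apply: big1 => p _; case: ifP => h; first by rewrite mulr0.
    by move: (hdstar.1 p); rewrite le_eqVlt h orbF => /eqP <-; rewrite mul0r.
  rewrite addr0 gerDl; apply: sumr_le0 => p _; apply: mulr_ge0_le0; first exact: hd.1.
  by case: ifP => // _; exact: Ale.
move=> p.
have rp1 : r p <= 1 by rewrite -r1; exact: (@le_sum_term R _ r p r0).
have key : (r p - r2 p) * sig = r p * T - e p.
  by rewrite /r2 mulrBl divfK ?gt_eqF // /sig; ring.
have hb : `|r p - r2 p| <= T + e p.
  move: key; set u := r p - r2 p => key.
  have ep := e0 p; have rp0 := r0 p.
  rewrite ler_norml; apply/andP; split.
    case: (lerP 0 u) => hu; first lra.
    have : u * sig <= u by rewrite /sig; nra.
    nra.
  case: (lerP u 0) => hu; first lra.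
  have : u <= u * sig by rewrite /sig; nra.
  nra.
apply: (le_trans hb).
have ebp := ebound p.
have hN : 0 <= (#|{: S * A}|%:R : R) by [].
rewrite -/eps -/Dst; nra.
Qed.

Lemma subopt_bounds (R : realType) (S A : finType) (P : S -> A -> S -> R) (mu0 : S -> R)
  (gamma : R) (hP : is_kernel P) (hmu0 : is_dist_S mu0) (g1 : gamma < 1)
  (dstar : sa_vec R S A) (hdstar : Phi P mu0 gamma dstar) (r : sa_vec R S A) (hr : simplex r) :
  0 <= subopt P mu0 gamma r dstar <= 1.
Proof.
have [r0 r1] := hr.
have ub : forall d, Phi P mu0 gamma d -> dotv r d <= 1.
  move=> d hd; rewrite -(@sum_Phi R S A P mu0 gamma hP hmu0 g1 d hd).
  apply: ler_sum => p _.
  have rp1 : r p <= 1 by rewrite -r1; exact: (@le_sum_term R _ r p r0).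
  have := hd.1 p; have := r0 p; nra.
have hs : has_ubound [set dotv r dt | dt in Phi P mu0 gamma].
  by exists 1 => y [d hd <-]; exact: ub.
have h1 : dotv r dstar <= sup [set dotv r dt | dt in Phi P mu0 gamma].
  by apply: ub_le_sup => //; exists dstar.
have h2 : sup [set dotv r dt | dt in Phi P mu0 gamma] <= 1.
  by apply: ge_sup; [exists (dotv r dstar), dstar | move=> y [d hd <-]; exact: ub].
have h3 : 0 <= dotv r dstar.
  by apply: sumr_ge0 => p _; apply: mulr_ge0; [exact: r0 | exact: hdstar.1].
rewrite /subopt; apply/andP; split; lra.
Qed.

Theorem mainTheorem6 (R : realType) (S A : finType)
  (P : S -> A -> S -> R) (mu0 : S -> R) (gamma : R)
  (hP : is_kernel P) (hmu0 : is_dist_S mu0)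
  (hgamma0 : 0 < gamma) (hgamma1 : gamma < 1)
  (dstar : sa_vec R S A) (hdstar : Phi P mu0 gamma dstar) :
  exists C : R, 0 < C /\
    forall (K : nat) (dk : 'I_K -> sa_vec R S A) (epsk : 'I_K -> R),
      (0 < K)%N ->
      (forall k, Phi P mu0 gamma (dk k)) ->
      (forall k, 0 <= epsk k) ->
      feasR P mu0 gamma dk epsk !=set0 ->
      dH (feasR P mu0 gamma dk epsk) (feasRstar P mu0 gamma dstar)
        <= C * Gap P mu0 gamma (feasR P mu0 gamma dk epsk) dstar.
Proof.
pose Dst := \sum_q (if 0 < dstar q then (dstar q)^-1 else 0).
have Dst0 : 0 <= Dst.
  by apply: sumr_ge0 => q _; case: ifP => // hq; rewrite invr_ge0 ltW.
have hN : 0 <= (#|{: S * A}|%:R : R) by [].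
exists ((#|{: S * A}|%:R + 1) * (Dst + 1)); split.
  by apply: mulr_gt0; apply: ltr_pwDr.
move=> K dk epsk _ _ _ [x0 hx0].
set C := ((_ + 1) * (Dst + 1)).
have C0 : 0 <= C by rewrite /C; apply: mulr_ge0; apply: addr_ge0.
have Gub : has_ubound [set subopt P mu0 gamma r dstar | r in feasR P mu0 gamma dk epsk].
  exists 1 => y [r [hr _] <-].
  by have /andP[] := @subopt_bounds R S A P mu0 gamma hP hmu0 hgamma1 dstar hdstar r hr.
apply: ge_sup.
  by exists (inf [set dinf x0 y | y in feasRstar P mu0 gamma dstar]), x0.
move=> z [x hx <-].
have [r2 [hr2 hb]] := @pointwise R S A P mu0 gamma hP hmu0 hgamma0 hgamma1 dstar hdstar x hx.1.
have sub0 : 0 <= subopt P mu0 gamma x dstar.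
  by have /andP[] := @subopt_bounds R S A P mu0 gamma hP hmu0 hgamma1 dstar hdstar x hx.1.
have hlb : has_lbound [set dinf x y | y in feasRstar P mu0 gamma dstar].
  exists 0 => y [r3 _ <-]; rewrite /dinf.
  elim/big_ind: _ => // a b ha hb'; rewrite le_max ha //.
apply: le_trans (ge_inf hlb (ex_intro2 _ _ r2 hr2 erefl)) _.
apply: (@le_trans _ _ (C * subopt P mu0 gamma x dstar)).
  rewrite /dinf; apply: bigmax_le; first exact: mulr_ge0.
  by move=> p _; exact: hb.
apply: ler_wpM2l => //; apply: ub_le_sup => //; by exists x.
Qed.
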